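(* Let $p_0,p_1,p_2$ be positive integers with $\gcd(p_0,p_1,p_2)=1$, and put $n=p_0+p_1+p_2$. Let $E=(\mathbb{Z}/n\mathbb{Z})\times\{0,1,2\}$ (a set of $3n$ elements) and define permutations $\sigma_0,\sigma_1$ of $E$ by $$\sigma_0(m,0)=(m,1),\quad \sigma_0(m,1)=(m,2),\quad \sigma_0(m,2)=(m,0),$$ $$\sigma_1(m,0)=(m-p_1,2),\quad \sigma_1(m,1)=(m-p_2,0),\quad \sigma_1(m,2)=(m-p_0,1),$$ with arithmetic in the first coordinate taken modulo $n$. Let $G=\langle\sigma_0,\sigma_1\rangle$ (the monodromy group of the dessin $D(p_0,p_1,p_2)$ on the billiards surface of the triangle with angles $p_0\pi/n,p_1\pi/n,p_2\pi/n$), $N=\langle\sigma_0\sigma_1,\sigma_1\sigma_0\rangle$ and $H=\langle\sigma_0\rangle$. Then $G=N\rtimes H$ (internal semidirect product, with $N$ normal). Furthermore, if $\alpha=\gcd(n,\,p_0p_1-p_2^2)$, then $$G\cong (C_n\times C_{n/\alpha})\rtimes C_3,$$ where $C_k$ denotes the cyclic group of order $k$.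
   Context: The dessin $D(p_0,p_1,p_2)$ is the bicolored graph on the rational billiards surface of the triangle with angles $(p_0\pi/n,p_1\pi/n,p_2\pi/n)$, with a black vertex in each of the $n$ copies of the triangle having the original orientation, a white vertex in each of the $n$ reflected copies, and an edge for each pair of adjacent triangles. Edges are labeled $(m,i)$, where $m$ indexes the black vertex (the copy rotated by $2m\pi/n$) and $i$ indicates the side $s_i$ (opposite the angle $p_i\pi/n$) through which the edge passes; the monodromy permutations $\sigma_0,\sigma_1$ (counterclockwise rotation of edges around black, resp. white, vertices) act on the edges by the formulas given in the claim. Products of permutations are composed as functions, $(\sigma_0\sigma_1)(e)=\sigma_0(\sigma_1(e))$. *)

(* Defs.v *)
From mathcomp Require Import all_boot all_order all_algebra all_fingroup all_solvable.
Set Implicit Arguments. Unset Strict Implicit. Unset Printing Implicit Defensive.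

Definition edge (n : nat) : finType := ('I_n * 'I_3)%type.

Lemma ord_n_gt0 n (m : 'I_n) : 0 < n.
Proof. exact: leq_ltn_trans (leq0n m) (ltn_ord m). Qed.

(* subm m k = (m - k) mod n *)
Definition subm n (m : 'I_n) (k : nat) : 'I_n :=
  Ordinal (ltn_pmod (m + (n - k %% n)) (ord_n_gt0 m)).

Lemma subm_inj n k : injective (fun m : 'I_n => subm m k).
Proof.
move=> a b /(congr1 val) /= /eqP; rewrite eqn_modDr => /eqP.
by rewrite !modn_small // => /val_inj.
Qed.

Definition sigma0_fun n (x : edge n) : edge n := (x.1, ordS x.2).

(* sigma1 (m,0) = (m-p1,2), (m,1) = (m-p2,0), (m,2) = (m-p0,1):
   second coordinate i |-> i-1 mod 3, shift q i = [:: p1; p2; p0]`_i. *)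
Definition sigma1_fun (p0 p1 p2 : nat) n (x : edge n) : edge n :=
  (subm x.1 (nth 0 [:: p1; p2; p0] x.2), ord_pred x.2).

Lemma sigma0_inj n : injective (@sigma0_fun n).
Proof.
move=> [a i] [b j] H.
have E1 := congr1 fst H; have E2 := congr1 snd H.
by rewrite /= in E1 E2; rewrite E1 (ordS_inj E2).
Qed.

Lemma sigma1_inj p0 p1 p2 n : injective (@sigma1_fun p0 p1 p2 n).
Proof.
move=> [a i] [b j] H.
have E1 := congr1 fst H; have E2 := congr1 snd H.
rewrite /= in E1 E2; have E := ord_pred_inj E2; subst j.
by rewrite (subm_inj E1).
Qed.

Definition sigma0 n : {perm edge n} := perm (@sigma0_inj n).
Definition sigma1 p0 p1 p2 : {perm edge (p0 + p1 + p2)} :=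
  perm (@sigma1_inj p0 p1 p2 (p0 + p1 + p2)).

Open Scope group_scope.

Definition monodromy p0 p1 p2 : {group {perm edge (p0 + p1 + p2)}} :=
  generated_group [set sigma0 (p0 + p1 + p2); sigma1 p0 p1 p2].

(* N = <sigma0 sigma1, sigma1 sigma0>.  (MathComp's product s * t is
   "first s, then t", so the paper's sigma0 sigma1 is sigma1 * sigma0;
   the generating set is symmetric in any case.) *)
Definition monoN p0 p1 p2 : {group {perm edge (p0 + p1 + p2)}} :=
  generated_group [set sigma1 p0 p1 p2 * sigma0 (p0 + p1 + p2);
         sigma0 (p0 + p1 + p2) * sigma1 p0 p1 p2].

Definition monoH p0 p1 p2 : {group {perm edge (p0 + p1 + p2)}} :=
  cycle_group (sigma0 (p0 + p1 + p2)).

(* Main.v *)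
Require Import Defs.
From mathcomp Require Import all_boot all_order all_algebra all_fingroup all_solvable.
From mathcomp Require Import ring.
Set Implicit Arguments. Unset Strict Implicit. Unset Printing Implicit Defensive.
Import GRing.Theory Num.Theory.

Section PartA.

Local Open Scope ring_scope.

Lemma addz_subproof n (m : 'I_n) (z : int) : (`|modz (m%:Z + z) n| < n)%N.
Proof.
have n0 := ord_n_gt0 m.
have h1 : 0 <= modz (m%:Z + z) n by apply: modz_ge0; rewrite -lt0n.
have h2 : modz (m%:Z + z) n < n by apply: ltz_pmod.
by rewrite -ltz_nat gez0_abs.
Qed.

Definition addz n (m : 'I_n) (z : int) : 'I_n := Ordinal (addz_subproof m z).

Lemma addzE n (m : 'I_n) z : ((addz m z : nat)%:Z) = modz (m%:Z + z) n.
Proof.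
have n0 := ord_n_gt0 m.
by rewrite /= gez0_abs // modz_ge0 // -lt0n.
Qed.

Lemma dvd_modzB (n : nat) (x : int) : (n%:Z %| modz x n - x)%Z.
Proof.
apply/dvdzP; exists (- divz x n); rewrite {2}(divz_eq x n); ring.
Qed.

Lemma addz_eqP n (m m' : 'I_n) z z' :
  (addz m z = addz m' z') <-> (n%:Z %| (m%:Z + z) - (m'%:Z + z'))%Z.
Proof.
split.
  move/(congr1 (fun x : 'I_n => (x : nat)%:Z)); rewrite !addzE => /eqP.
  by rewrite eqz_mod_dvd.
move=> H; apply: val_inj => /=.
have : ((addz m z : nat)%:Z) = ((addz m' z' : nat)%:Z).
  by rewrite !addzE; apply/eqP; rewrite eqz_mod_dvd.
by case.
Qed.

Lemma addz_dvd n (m : 'I_n) z : (n%:Z %| (addz m z : nat)%:Z - (m%:Z + z))%Z.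
Proof. by rewrite addzE dvd_modzB. Qed.

Lemma addz0 n (m : 'I_n) : addz m 0 = m.
Proof.
have n0 := ord_n_gt0 m.
apply: val_inj => /=; rewrite addr0 modz_small ?ltz_nat ?ltn_ord //.
Qed.

Definition coef (w : 'rV[int]_2) (i : 'I_3) : int :=
  if i == 0 :> nat then w 0 0 else if i == 1 :> nat then w 0 1
  else - (w 0 0 + w 0 1).

Definition tr_fun n (w : 'rV[int]_2) (x : edge n) : edge n :=
  (addz x.1 (coef w x.2), x.2).

Lemma tr_inj n w : injective (@tr_fun n w).
Proof.
move=> [a i] [b j] H.
have E1 := congr1 fst H; have E2 := congr1 snd H.
rewrite /= in E1 E2; subst j.
move/addz_eqP: E1 => E1.
have : (n%:Z %| (a%:Z + 0) - (b%:Z + 0))%Z.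
  by rewrite (_ : (a%:Z + 0) - (b%:Z + 0) = (a%:Z + coef w i) - (b%:Z + coef w i)) //; ring.
by move/addz_eqP; rewrite !addz0 => ->.
Qed.

Definition tr n w : {perm edge n} := perm (@tr_inj n w).
Arguments tr {n} w.

Lemma trE n (w : 'rV[int]_2) (x : edge n) : tr w x = (addz x.1 (coef w x.2), x.2).
Proof. by rewrite permE. Qed.

End PartA.
Arguments tr {n} w.

Section PartB.
Local Open Scope ring_scope.

Definition rowv (a b : int) : 'rV[int]_2 := \row_(j < 2) (if j == 0 :> nat then a else b).

Lemma rowv00 a b : rowv a b 0 0 = a. Proof. by rewrite mxE. Qed.
Lemma rowv01 a b : rowv a b 0 1 = b. Proof. by rewrite mxE. Qed.

Lemma rowv_eta (w : 'rV[int]_2) : w = rowv (w 0 0) (w 0 1).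
Proof.
apply/rowP => j; rewrite mxE; case: j => [[|[|j]] Hj] //=.
- by congr (w _ _); apply: val_inj.
- by congr (w _ _); apply: val_inj.
Qed.

Lemma rowvD a b c d : rowv a b + rowv c d = rowv (a + c) (b + d).
Proof. by apply/rowP => j; rewrite !mxE; case: ifP. Qed.
Lemma rowvZ k a b : k *: rowv a b = rowv (k * a) (k * b).
Proof. by apply/rowP => j; rewrite !mxE; case: ifP. Qed.
Lemma rowvN a b : - rowv a b = rowv (- a) (- b).
Proof. by apply/rowP => j; rewrite !mxE; case: ifP. Qed.

Lemma coefD w w' i : coef (w + w') i = coef w i + coef w' i.
Proof. rewrite /coef !mxE; case: ifP => _; last case: ifP => _; by [|ring]. Qed.

Lemma tr_mul n (w w' : 'rV[int]_2) : (tr w * tr w' = tr (w + w') :> {perm edge n})%g.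
Proof.
apply/permP => [[m i]]; rewrite permM !trE /=; congr pair.
apply/addz_eqP; rewrite coefD.
rewrite (_ : _ - _ = ((addz m (coef w i) : nat)%:Z - (m%:Z + coef w i))); last by ring.
exact: addz_dvd.
Qed.

Lemma tr_eq1 n (w : 'rV[int]_2) : (0 < n)%N ->
  (tr w = 1 :> {perm edge n})%g <-> w 0 0 \in dvdz n /\ w 0 1 \in dvdz n.
Proof.
have E : forall x c : int, (x + c) - (x + 0) = c by move=> *; ring.
move=> n0; split.
  move=> H; set m0 : 'I_n := Ordinal n0.
  have H0 := congr1 (fun s : {perm edge n} => (s (m0, 0)).1) H.
  have H1 := congr1 (fun s : {perm edge n} => (s (m0, 1)).1) H.
  rewrite /= !perm1 !trE /= in H0 H1.
  rewrite -{2}(addz0 m0) in H0; rewrite -{2}(addz0 m0) in H1.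
  move/addz_eqP: H0; move/addz_eqP: H1.
  rewrite /coef /= !E.
  by move=> -> ->.
case=> H0 H1; apply/permP => [[m i]]; rewrite perm1 trE /=; congr pair.
rewrite -{2}(addz0 m); apply/addz_eqP; rewrite E.
rewrite /coef; case: ifP => _ //; case: ifP => _ //.
by rewrite rpredN rpredD.
Qed.

Lemma tr0 n : (tr 0 = 1 :> {perm edge n})%g.
Proof.
apply/permP => [[m i]]; rewrite perm1 trE /=; congr pair.
rewrite (_ : coef 0 i = 0) ?addz0 //.
rewrite /coef !mxE; case: ifP => _ //; case: ifP => _ //; by rewrite addr0 oppr0.
Qed.

Lemma tr_cong n (w w' : 'rV[int]_2) : (0 < n)%N ->
  (w - w') 0 0 \in dvdz n -> (w - w') 0 1 \in dvdz n ->
  (tr w = tr w' :> {perm edge n}).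
Proof.
move=> n0 h0 h1.
have E : (tr (w - w') = 1 :> {perm edge n})%g by apply/tr_eq1.
by rewrite -(subrK w' w) -tr_mul E mul1g.
Qed.

Lemma tr_expn n (w : 'rV[int]_2) k : (tr w ^+ k = tr (k%:Z *: w) :> {perm edge n})%g.
Proof.
elim: k => [|k IH]; first by rewrite expg0 scale0r tr0.
by rewrite expgSr IH tr_mul intS scalerDl scale1r addrC.
Qed.

Lemma tr_scale n (w : 'rV[int]_2) c : (0 < n)%N ->
  (tr (c *: w) = tr w ^+ `|modz c n| :> {perm edge n})%g.
Proof.
move=> n0; rewrite tr_expn gez0_abs ?modz_ge0 -?lt0n //.
have hc : c - modz c n \in dvdz n by rewrite -opprB rpredN dvd_modzB.
apply: tr_cong => //; rewrite !mxE -mulrBl; exact: dvdz_mulr.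
Qed.

Lemma tr_inv n (w : 'rV[int]_2) : ((tr w)^-1 = tr (- w) :> {perm edge n})%g.
Proof. by apply/eqP; rewrite eq_invg_mul tr_mul subrr tr0. Qed.

Lemma tr_comm n (w w' : 'rV[int]_2) : commute (tr w : {perm edge n}) (tr w').
Proof. by rewrite /commute !tr_mul addrC. Qed.

Definition shiftv (w : 'rV[int]_2) := rowv (- (w 0 0 + w 0 1)) (w 0 0).

Lemma tr_sigma0 n (w : 'rV[int]_2) :
  (tr w * sigma0 n = sigma0 n * tr (shiftv w))%g.
Proof.
apply/permP => [[m i]]; rewrite !permM /sigma0 !permE /sigma0_fun /tr_fun /=.
congr pair; congr addz.
case: i => [[|[|[|i]]] Hi] //=; rewrite /coef /shiftv /= !mxE //=; ring.
Qed.

Lemma tr_conj n (w : 'rV[int]_2) : ((tr w) ^ sigma0 n = tr (shiftv w))%g.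
Proof. by rewrite conjgE tr_sigma0 mulgA mulVg mul1g. Qed.

Lemma sigma0_3 n : (sigma0 n ^+ 3 = 1)%g.
Proof.
apply/permP => [[m i]]; rewrite perm1 !expgS expg0 mulg1 !permM /sigma0 !permE /sigma0_fun /=.
congr pair; apply: val_inj; case: i => [[|[|[|i]]] Hi] //=.
Qed.

Lemma subm_addz n (m : 'I_n) (k : nat) : subm m k = addz m (- k%:Z).
Proof.
have n0 := ord_n_gt0 m.
apply: val_inj.
have : ((subm m k : nat)%:Z) = ((addz m (- k%:Z) : nat)%:Z); last by case.
have -> : ((subm m k : nat)%:Z) = modz ((m + (n - k %% n))%N) n by rewrite modz_nat.
rewrite addzE; apply/eqP; rewrite eqz_mod_dvd.
rewrite PoszD -(subzn (ltnW (ltn_pmod k n0))) -modz_nat.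
rewrite (_ : _ - _ = n%:Z - (modz k%:Z n - k%:Z)); last by ring.
by rewrite rpredB ?dvdzz ?dvd_modzB.
Qed.

Definition ra (p0 p1 p2 : nat) := rowv (- p1%:Z) (- p2%:Z).
Definition rb (p0 p1 p2 : nat) := rowv (- p2%:Z) (- p0%:Z).

Lemma s1s0 p0 p1 p2 :
  (sigma1 p0 p1 p2 * sigma0 _ = tr (ra p0 p1 p2))%g.
Proof.
apply/permP => [[m i]]; rewrite !permM /sigma0 /sigma1 !permE /sigma0_fun /sigma1_fun /tr_fun /=.
rewrite ord_predK; congr pair; rewrite subm_addz; apply/addz_eqP.
case: i => [[|[|[|i]]] Hi] //=; rewrite /coef /ra /= !mxE /=; apply/dvdzP.
- by exists 0; ring.
- by exists 0; ring.
- by exists (-1); rewrite !PoszD; ring.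
Qed.

Lemma s0s1 p0 p1 p2 :
  (sigma0 _ * sigma1 p0 p1 p2 = tr (rb p0 p1 p2))%g.
Proof.
apply/permP => [[m i]]; rewrite !permM /sigma0 /sigma1 !permE /sigma0_fun /sigma1_fun /tr_fun /=.
rewrite ordSK; congr pair; rewrite subm_addz; apply/addz_eqP.
case: i => [[|[|[|i]]] Hi] //=; rewrite /coef /rb /= !mxE /=; apply/dvdzP.
- by exists 0; ring.
- by exists 0; ring.
- by exists (-1); rewrite !PoszD; ring.
Qed.

End PartB.

Section PartC.
Local Open Scope ring_scope.

Definition Amat (p0 p1 p2 : nat) : 'M[int]_2 :=
  \matrix_(i < 2, j < 2) (if i == 0 :> nat then ra p0 p1 p2 0 j else rb p0 p1 p2 0 j).

Lemma rowv_mulA p0 p1 p2 z0 z1 :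
  rowv z0 z1 *m Amat p0 p1 p2 = z0 *: ra p0 p1 p2 + z1 *: rb p0 p1 p2.
Proof.
apply/rowP => j; rewrite !mxE big_ord_recr big_ord1 /= !mxE /=.
by [].
Qed.

Lemma mem_a p0 p1 p2 :
  (tr (ra p0 p1 p2) : {perm edge (p0+p1+p2)}) \in monoN p0 p1 p2.
Proof. by rewrite -s1s0; apply: mem_gen; rewrite !inE eqxx. Qed.

Lemma mem_b p0 p1 p2 :
  (tr (rb p0 p1 p2) : {perm edge (p0+p1+p2)}) \in monoN p0 p1 p2.
Proof. by rewrite -s0s1; apply: mem_gen; rewrite !inE eqxx orbT. Qed.

Lemma N_tr p0 p1 p2 (z : 'rV[int]_2) : (0 < p0 + p1 + p2)%N ->
  (tr (z *m Amat p0 p1 p2) : {perm edge (p0+p1+p2)}) \in monoN p0 p1 p2.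
Proof.
move=> n0; rewrite (rowv_eta z) rowv_mulA -tr_mul !tr_scale //.
by rewrite groupM // groupX // ?mem_a ?mem_b.
Qed.

Lemma N_cong p0 p1 p2 (w : 'rV[int]_2) (z : 'rV[int]_2) : (0 < p0 + p1 + p2)%N ->
  (w - z *m Amat p0 p1 p2) 0 0 \in dvdz (p0 + p1 + p2)%N ->
  (w - z *m Amat p0 p1 p2) 0 1 \in dvdz (p0 + p1 + p2)%N ->
  (tr w : {perm edge (p0+p1+p2)}) \in monoN p0 p1 p2.
Proof. by move=> n0 h0 h1; rewrite (tr_cong n0 h0 h1) N_tr. Qed.

Lemma N_norm p0 p1 p2 : (0 < p0 + p1 + p2)%N ->
  sigma0 (p0 + p1 + p2) \in 'N(monoN p0 p1 p2).
Proof.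
move=> n0.
have H : forall (gT : finGroupType) (S : {set gT}) (G : {group gT}) x,
  S :^ x \subset G -> <<S>> :^ x \subset G.
  by move=> gT S G x h; rewrite -genJ gen_subG.
rewrite inE; apply: H; rewrite conjUg !conjg_set1 subUset !sub1set.
rewrite s1s0 s0s1 !tr_conj; apply/andP; split.
- apply: (@N_cong _ _ _ _ (rowv (-1) (-1))) => //;
  rewrite rowv_mulA /shiftv /ra /rb !rowvZ !rowvD !rowv00 !rowv01 rowvN rowvD !mxE /=;
  apply/dvdzP; [exists 0 | exists (-1)]; rewrite !PoszD; ring.
- apply: (@N_cong _ _ _ _ (rowv 1 0)) => //;
  rewrite rowv_mulA /shiftv /ra /rb !rowvZ !rowvD !rowv00 !rowv01 rowvN rowvD !mxE /=;
  apply/dvdzP; [exists 1 | exists 0]; rewrite !PoszD; ring.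
Qed.

Local Open Scope group_scope.

Lemma N_tr_ex p0 p1 p2 (x : {perm edge (p0+p1+p2)}) :
  x \in monoN p0 p1 p2 -> exists w, x = tr w.
Proof.
set a : {perm edge (p0+p1+p2)} := tr (ra p0 p1 p2).
set b : {perm edge (p0+p1+p2)} := tr (rb p0 p1 p2).
have Hsub : monoN p0 p1 p2 \subset <[a]> * <[b]>.
  rewrite -cent_joinEr; last by apply: cents_cycle; rewrite /a /b; apply: tr_comm.
  rewrite gen_subG subUset !sub1set s1s0 s0s1.
  by apply/andP; split; apply: mem_gen; rewrite inE cycle_id ?orbT.
move/(subsetP Hsub) => /mulsgP [y z /cycleP [i ->] /cycleP [j ->] ->].
by exists (i%:Z *: ra p0 p1 p2 + j%:Z *: rb p0 p1 p2)%R; rewrite !tr_expn tr_mul.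
Qed.

Lemma sigma0_neq p0 p1 p2 (w : 'rV[int]_2) k : (0 < p0 + p1 + p2)%N ->
  sigma0 (p0+p1+p2) ^+ k = tr w -> sigma0 (p0+p1+p2) ^+ k = 1.
Proof.
move=> n0; rewrite -(expg_mod k (sigma0_3 _)).
have : (k %% 3 < 3)%N by rewrite ltn_pmod.
move: (k %% 3)%N => [|[|[|//]]] _ //; set m0 : 'I_(p0+p1+p2) := Ordinal n0;
  move/(congr1 (fun s : {perm edge (p0+p1+p2)} => val (s (m0, ord0)).2));
  by rewrite ?expgS ?expg0 ?mulg1 ?permM trE /sigma0 !permE.
Qed.

Lemma part1 p0 p1 p2 : (0 < p0 + p1 + p2)%N ->
  monoN p0 p1 p2 ><| monoH p0 p1 p2 = monodromy p0 p1 p2.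
Proof.
move=> n0.
have nNH : monoH p0 p1 p2 \subset 'N(monoN p0 p1 p2) by rewrite cycle_subG N_norm.
have tiNH : monoN p0 p1 p2 :&: monoH p0 p1 p2 = 1.
  apply/trivgP/subsetP => x /setIP [xN /cycleP [k xk]].
  have [w xw] := N_tr_ex xN.
  by rewrite inE xk (sigma0_neq n0 (etrans (esym xk) xw)).
rewrite sdprodE //; apply/eqP; rewrite eqEsubset; apply/andP; split.
  rewrite mul_subG //.
    rewrite gen_subG subUset !sub1set.
    by rewrite !groupM // mem_gen // !inE eqxx ?orbT.
  by rewrite cycle_subG mem_gen // !inE eqxx.
rewrite -norm_joinEr // gen_subG subUset !sub1set.
apply/andP; split.
  by apply: (subsetP (joing_subr _ _)); rewrite cycle_id.
rewrite -[sigma1 _ _ _](mulgK (sigma0 (p0+p1+p2))) groupM ?groupV //.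
  by apply: (subsetP (joing_subl _ _)); rewrite mem_gen // !inE eqxx.
by apply: (subsetP (joing_subr _ _)); rewrite cycle_id.
Qed.

End PartC.

Section PartD.
Local Open Scope ring_scope.

Lemma det2 (R : comNzRingType) (M : 'M[R]_2) : \det M = M 0 0 * M 1 1 - M 0 1 * M 1 0.
Proof.
rewrite (expand_det_row M 0) big_ord_recr big_ord1 /cofactor !det_mx11 /= !mxE /=.
have -> : widen_ord (leqnSn 1) ord0 = 0 :> 'I_2 by apply: val_inj.
have -> : lift 0 (0 : 'I_1) = 1 :> 'I_2 by apply: val_inj.
have -> : ord_max = 1 :> 'I_2 by apply: val_inj.
have -> : lift 1 (0 : 'I_1) = 0 :> 'I_2 by apply: val_inj.
rewrite expr0 expr1 mul1r mulN1r; ring.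
Qed.

Lemma dvd_mx (c : int) m k l (X : 'M[int]_(m,k)) (M : 'M[int]_(k,l)) :
  (forall i j, M i j \in dvdz c) -> forall i j, (X *m M) i j \in dvdz c.
Proof. by move=> H i j; rewrite mxE; apply: rpred_sum => t _; apply: dvdz_mull. Qed.

Lemma dvd_mxr (c : int) m k l (X : 'M[int]_(m,k)) (M : 'M[int]_(k,l)) :
  (forall i j, X i j \in dvdz c) -> forall i j, (X *m M) i j \in dvdz c.
Proof. by move=> H i j; rewrite mxE; apply: rpred_sum => t _; apply: dvdz_mulr. Qed.

Lemma dvd_row (c : int) (y0 y1 : int) (B : 'M[int]_2) :
  y0 \in dvdz c -> y1 \in dvdz c -> forall j, (rowv y0 y1 *m B) 0 j \in dvdz c.
Proof. by move=> h0 h1 j; apply: dvd_mxr => i k; rewrite mxE; case: ifP. Qed.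

Lemma coprime_divg n e : (0 < n)%N -> coprime (n %/ gcdn n e) (e %/ gcdn n e).
Proof.
move=> n0; have g0 : (0 < gcdn n e)%N by rewrite gcdn_gt0 n0.
by rewrite /coprime -(eqn_pmul2r g0) muln_gcdl !divnK ?dvdn_gcdl ?dvdn_gcdr // mul1n.
Qed.

Lemma dvdn_mul_gcd n e k : (0 < n)%N -> (n %| k * e)%N = (n %/ gcdn n e %| k)%N.
Proof.
move=> n0; have g0 : (0 < gcdn n e)%N by rewrite gcdn_gt0 n0.
have cop := coprime_divg e n0.
have -> : (k * e = k * (e %/ gcdn n e) * gcdn n e)%N by rewrite -mulnA divnK ?dvdn_gcdr.
rewrite {1}(_ : n = n %/ gcdn n e * gcdn n e)%N; last by rewrite divnK ?dvdn_gcdl.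
by rewrite dvdn_pmul2r // Gauss_dvdl.
Qed.

Lemma order_char (gT : finGroupType) (x : gT) m :
  (forall k, (x ^+ k == 1)%g = (m %| k)%N) -> #[x]%g = m.
Proof.
move=> H; apply/eqP; rewrite eqn_dvd order_dvdn H dvdnn /=.
by rewrite -H expg_order.
Qed.

Lemma unit_abs1 (x : int) : x \is a GRing.unit -> `|x|%N = 1%N.
Proof.
case/unitrPr => y /(congr1 absz); rewrite abszM /=; move/eqP; rewrite muln_eq1.
by case/andP => /eqP.
Qed.

Lemma sorted_dvd01 (d : seq int) : sorted dvdz d -> d`_1 \in dvdz d`_0.
Proof.
case: d => [|x [|y s]] /=; rewrite ?unfold_in /= ?dvdn0 //.
by case/andP.
Qed.

End PartD.

Section PartE.
Local Open Scope ring_scope.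

Lemma part2 p0 p1 p2 : (0 < p0)%N -> (0 < p1)%N -> (0 < p2)%N ->
  gcdn (gcdn p0 p1) p2 = 1%N ->
  monoN p0 p1 p2 \isog setX (Zp (p0+p1+p2))
     (Zp ((p0+p1+p2) %/ gcdn (p0+p1+p2) (absz (Posz (p0 * p1) - Posz (p2 ^ 2))))).
Proof.
move=> hp0 hp1 hp2 hg.
have n0 : (0 < p0 + p1 + p2)%N by rewrite !addn_gt0 hp0.
have [Lm uL [Rm uR [d sd defA]]] := int_Smith_normal_form (Amat p0 p1 p2).
set Dm := \matrix_(i, j) _ in defA.
have DmE : forall y0 y1, rowv y0 y1 *m Dm = rowv (y0 * d`_0) (y1 * d`_1).
  move=> y0 y1; apply/rowP => j; rewrite !mxE big_ord_recr big_ord1 /= !mxE /=.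
  by case: j => [[|[|j]] Hj] //=; rewrite ?mulr1n ?mulr0n ?mulr0 ?addr0 ?add0r.
pose n := (p0 + p1 + p2)%N.
pose T (y : 'rV[int]_2) : {perm edge (p0+p1+p2)} := tr (y *m Rm).
have T_mul : forall y y', (T y * T y' = T (y + y')%R)%g.
  by move=> y y'; rewrite /T tr_mul mulmxDl.
have T_scale : forall c y, (T (c *: y)%R = T y ^+ `|modz c n|)%g.
  by move=> c y; rewrite /T -scalemxAl tr_scale.
have T_exp : forall (k : nat) y, (T y ^+ k = T (k%:Z *: y)%R)%g.
  by move=> k y; rewrite /T tr_expn scalemxAl.
have T_inv : forall y, ((T y)^-1 = T (- y)%R)%g.
  by move=> y; rewrite /T tr_inv mulNmx.
have T_eq1 : forall y0 y1, (T (rowv y0 y1) == 1)%g = (y0 \in dvdz n) && (y1 \in dvdz n).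
  move=> y0 y1; apply/eqP/andP.
    move/(tr_eq1 _ n0) => [h0 h1].
    have H := dvd_row (invmx Rm) h0 h1.
    rewrite -rowv_eta mulmxK // in H.
    by split; [move: (H 0) | move: (H 1)]; rewrite mxE.
  case=> h0 h1; apply/(tr_eq1 _ n0).
  by split; apply: dvd_row.
have d01 := sorted_dvd01 sd.
have DmD : forall i j, Dm i j \in dvdz d`_0.
  move=> i j; rewrite mxE; case: i => [[|[|i]] Hi] //=; apply: rpredMn; [exact: dvdzz | exact: d01].
have AD : forall i j, Amat p0 p1 p2 i j \in dvdz d`_0.
  by rewrite defA; apply: dvd_mxr; apply: dvd_mx.
have d0_1 : absz d`_0 = 1%N.
  have := AD 0 0; have := AD 0 1; have := AD 1 1; rewrite !mxE /=.
  rewrite !unfold_in /= !abszN /= => h0 h1 h2.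
  by apply/eqP; rewrite -dvdn1 -hg !dvdn_gcd h0 h1 h2.
have detE : absz d`_1 = absz ((p0 * p1)%N%:Z - (p2 ^ 2)%N%:Z).
  have uL' : \det Lm \is a GRing.unit by rewrite -unitmxE.
  have uR' : \det Rm \is a GRing.unit by rewrite -unitmxE.
  have := congr1 determinant defA; rewrite !det_mulmx [\det (Amat _ _ _)]det2 [\det Dm]det2 !mxE /=.
  move/(congr1 absz); rewrite !abszM (unit_abs1 uL') (unit_abs1 uR') mul1n muln1.
  rewrite !mulr1n !mulr0n mulr0 subr0 abszM d0_1 mul1n (_ : (1 %% 2)%N = 1%N) // => <-.
  congr absz; rewrite PoszM.
  have -> : ((p2 ^ 2)%N : int) = p2%:Z * p2%:Z by rewrite -PoszM mulnn.
  ring.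
rewrite -detE.
pose g := T (rowv d`_0 0); pose h := T (rowv 0 d`_1).
have ordg : #[g]%g = n.
  apply: order_char => k; rewrite T_exp rowvZ T_eq1 mulr0 rpred0 andbT.
  by rewrite unfold_in /= abszM d0_1 muln1.
have ordh : #[h]%g = divn n (gcdn n (absz d`_1)).
  apply: order_char => k; rewrite T_exp rowvZ T_eq1 mulr0 rpred0 /=.
  by rewrite unfold_in /= abszM dvdn_mul_gcd.
have gN : g \in monoN p0 p1 p2.
  have E : rowv d`_0 0 *m Rm = (rowv 1 0 *m invmx Lm) *m Amat p0 p1 p2.
    by rewrite defA !mulmxA mulmxKV // DmE mul1r mul0r.
  by rewrite /g /T E N_tr.
have hN : h \in monoN p0 p1 p2.
  have E : rowv 0 d`_1 *m Rm = (rowv 0 1 *m invmx Lm) *m Amat p0 p1 p2.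
    by rewrite defA !mulmxA mulmxKV // DmE mul1r mul0r.
  by rewrite /h /T E N_tr.
have memT : forall c c', T (c *: rowv d`_0 0 + c' *: rowv 0 d`_1) \in (<[g]> * <[h]>)%g.
  by move=> c c'; rewrite -T_mul !T_scale; apply: mem_mulg; apply: mem_cycle.
have memGH : forall z, tr (z *m Amat p0 p1 p2) \in (<[g]> * <[h]>)%g.
  move=> z; have := memT ((z *m Lm) 0 0) ((z *m Lm) 0 1).
  rewrite /T !rowvZ rowvD !mulr0 addr0 add0r -DmE -rowv_eta.
  by rewrite defA !mulmxA.
have tiGH : (<[g]> :&: <[h]> = 1)%g.
  apply/trivgP/subsetP => x /setIP [/cycleP [i ->] /cycleP [j Hij]].
  rewrite inE.
  have : (g ^+ i * (h ^+ j)^-1 == 1)%g by rewrite Hij mulgV.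
  rewrite /g /h (T_exp i) (T_exp j).
  rewrite T_inv T_mul !rowvZ rowvN rowvD T_eq1 => /andP [H0 _].
  rewrite T_eq1 mulr0 rpred0 andbT.
  by rewrite !mulr0 oppr0 addr0 in H0.
have cGH : <[h]>%g \subset 'C(<[g]>)%g by apply: cents_cycle; apply: tr_comm.
have defN : (<[g]> * <[h]>)%g = monoN p0 p1 p2.
  apply/eqP; rewrite eqEsubset mul_subG ?cycle_subG ?gN ?hN //=.
  rewrite -(cent_joinEr cGH) gen_subG subUset !sub1set s1s0 s0s1.
  have sub : ((<[g]> * <[h]>)%g \subset (<[g]> <*> <[h]>)%g) by rewrite cent_joinEr.
  have Ea : tr (ra p0 p1 p2) = tr (rowv 1 0 *m Amat p0 p1 p2) :> {perm edge (p0+p1+p2)}.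
    by rewrite rowv_mulA scale1r scale0r addr0.
  have Eb : tr (rb p0 p1 p2) = tr (rowv 0 1 *m Amat p0 p1 p2) :> {perm edge (p0+p1+p2)}.
    by rewrite rowv_mulA scale1r scale0r add0r.
  by rewrite Ea Eb; apply/andP; split; apply: (subsetP sub); apply: memGH.
have dG : (<[g]> \x <[h]> = monoN p0 p1 p2)%g by rewrite dprodE.
apply: (isog_dprod dG (setX_dprod _ _)).
  apply: (isog_trans _ (isog_setX1 _ _)).
  by have := Zp_isog g; rewrite ordg isog_sym.
apply: (isog_trans _ (isog_set1X _ _)).
by have := Zp_isog h; rewrite ordh isog_sym.
Qed.

End PartE.


Lemma order_sigma0 n : (0 < n)%N -> #[sigma0 n]%g = 3.
Proof.
move=> n0.
have d3 : (#[sigma0 n]%g %| 3)%N by rewrite order_dvdn sigma0_3.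
have ne1 : (sigma0 n != 1)%g.
  apply/eqP => E; set m0 : 'I_n := Ordinal n0.
  have := congr1 (fun s : {perm edge n} => val (s (m0, ord0)).2) E.
  by rewrite perm1 /sigma0 permE.
rewrite -order_eq1 in ne1.
have l3 := @dvdn_leq _ 3 isT d3.
have g0 := order_gt0 (sigma0 n).
move: g0 l3 d3 ne1.
by case: #[sigma0 n]%g => [|[|[|[|k]]]].
Qed.

Theorem theorem1 (p0 p1 p2 : nat) :
  (0 < p0)%N -> (0 < p1)%N -> (0 < p2)%N -> gcdn (gcdn p0 p1) p2 = 1%N ->
  let n := (p0 + p1 + p2)%N in
  let alpha := gcdn n (absz (Posz (p0 * p1) - Posz (p2 ^ 2))%R) in
  (monoN p0 p1 p2 ><| monoH p0 p1 p2 = monodromy p0 p1 p2)%g /\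
  exists K L : {group {perm edge n}},
    [/\ (K ><| L = monodromy p0 p1 p2)%g,
        K \isog setX (Zp n) (Zp (n %/ alpha)) &
        L \isog Zp 3].
Proof.
move=> hp0 hp1 hp2 hg n alpha.
have n0 : (0 < p0 + p1 + p2)%N by rewrite !addn_gt0 hp0.
split; first exact: part1.
exists (monoN p0 p1 p2), (monoH p0 p1 p2); split.
- exact: part1.
- exact: part2.
- by have := Zp_isog (sigma0 (p0 + p1 + p2)); rewrite order_sigma0 // isog_sym.
Qed.
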